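(* For every integer $n\ge 1$, $\chi_\rho(X_n)=3$ and $\chi_\rho(Y_n)=3$.
   Context: All graphs are finite and simple; $d(u,v)$ is the shortest-path distance. A $k$-packing coloring of $G$ is a map $c:V(G)\to\{1,\dots,k\}$ such that whenever $u\neq v$ and $c(u)=c(v)=i$, we have $d(u,v)>i$. $\chi_\rho(G)$ is the least $k$ such that $G$ has a $k$-packing coloring. $P_n$ is the path on $n$ vertices. $X_n$ is obtained from the disjoint union of $K_3$ and $P_n$ by adding an edge joining a vertex of $K_3$ to an end vertex of $P_n$ (the unique vertex if $n=1$). $Y_n$ is obtained from the disjoint union of $C_4$ and $P_n$ by adding an edge joining a vertex of $C_4$ to an end vertex of $P_n$ (the unique vertex if $n=1$). *)

(* Defs.v *)
From mathcomp Require Import all_boot.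
Set Implicit Arguments. Unset Strict Implicit. Unset Printing Implicit Defensive.

Definition dist_le (T : finType) (e : rel T) (i : nat) (u v : T) : Prop :=
  exists p : seq T, [/\ path e u p, last u p = v & size p <= i].

Definition packing_coloring (T : finType) (e : rel T) (k : nat) (c : T -> nat) : Prop :=
  (forall v, 1 <= c v <= k) /\
  (forall u v, u != v -> c u = c v -> ~ dist_le e (c u) u v).

Definition packing_chromatic_number_is (T : finType) (e : rel T) (k : nat) : Prop :=
  (exists c, packing_coloring e k c) /\
  (forall k', (exists c, packing_coloring e k' c) -> k <= k').

Definition symc (r : nat -> nat -> bool) (x y : nat) : bool := r x y || r y x.

(* X_n on vertices 0..n+2: K_3 on {0,1,2}, path 3-4-...-(n+2), edge 0-3. *)
Definition X_edge_nat (x y : nat) : bool :=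
  [|| [&& x < 3, y < 3 & x != y],
      symc (fun a b => (3 <= a) && (b == a.+1)) x y
    | symc (fun a b => (a == 0) && (b == 3)) x y].

Definition X_graph (n : nat) : rel 'I_(n + 3) := fun x y => X_edge_nat x y.

(* Y_n on vertices 0..n+3: C_4 = 0-1-2-3-0, path 4-5-...-(n+3), edge 0-4. *)
Definition Y_edge_nat (x y : nat) : bool :=
  [|| symc (fun a b => (a < 3) && (b == a.+1)) x y,
      symc (fun a b => (a == 0) && (b == 3)) x y,
      symc (fun a b => (4 <= a) && (b == a.+1)) x y
    | symc (fun a b => (a == 0) && (b == 4)) x y].

Definition Y_graph (n : nat) : rel 'I_(n + 4) := fun x y => Y_edge_nat x y.

(* Main.v *)
Require Import Defs.
From mathcomp Require Import all_boot zify.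

Definition g p := if p %% 2 == 1 then 1 else if p %% 4 == 0 then 3 else 2.
Definition cX v := if v == 1 then 1 else if v == 2 then 2 else if v == 0 then 3 else g (v - 2).
Definition PX v := if v == 1 then 0 else if v == 2 then 0 else if v == 0 then 1 else v - 1.
Definition cY v := if v == 1 then 1 else if v == 3 then 1 else if v == 2 then 2
  else if v == 0 then 3 else g (v - 3).
Definition PY v := if v == 0 then 1 else if v < 4 then 0 else v - 2.

Ltac crush := rewrite ?/X_edge_nat ?/Y_edge_nat ?/symc ?/cX ?/PX ?/cY ?/PY ?/g;
  repeat match goal with |- context[if ?b then _ else _] => case: (boolP b) => ? end; lia.

Lemma X1 a b : X_edge_nat a b -> cX a != cX b.
Proof. crush. Qed.
Lemma X2 a b : X_edge_nat a b -> PX b <= PX a + 1 /\ PX a <= PX b + 1.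
Proof. crush. Qed.
Lemma X3 a b : a != b -> cX a = cX b -> 2 <= cX a -> cX a + PX b < PX a \/ cX a + PX a < PX b.
Proof. crush. Qed.
Lemma X4 a : 1 <= cX a <= 3.
Proof. crush. Qed.
Lemma Y1 a b : Y_edge_nat a b -> cY a != cY b.
Proof. crush. Qed.
Lemma Y2 a b : Y_edge_nat a b -> PY b <= PY a + 1 /\ PY a <= PY b + 1.
Proof. crush. Qed.
Lemma Y3 a b : a != b -> cY a = cY b -> 2 <= cY a -> cY a + PY b < PY a \/ cY a + PY a < PY b.
Proof. crush. Qed.
Lemma Y4 a : 1 <= cY a <= 3.
Proof. crush. Qed.

Lemma walk_bound (T : finType) (e : rel T) (P : T -> nat) :
  (forall x y, e x y -> P y <= P x + 1 /\ P x <= P y + 1) ->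
  forall p u, path e u p -> P (last u p) <= P u + size p /\ P u <= P (last u p) + size p.
Proof.
move=> HP; elim=> [|x p IH] u /=; first by move=> _; lia.
move=> /andP [exu pth]; have := IH x pth; have := HP _ _ exu; lia.
Qed.

Lemma coloring_ok (T : finType) (e : rel T) (c P : T -> nat) k :
  (forall v, 1 <= c v <= k) ->
  (forall x y, e x y -> P y <= P x + 1 /\ P x <= P y + 1) ->
  (forall x y, e x y -> c x != c y) ->
  (forall x y, x != y -> c x = c y -> 2 <= c x -> c x + P y < P x \/ c x + P x < P y) ->
  packing_coloring e k c.
Proof.
move=> Hr HP He Hd; split=> // u v neq ceq [p [pth lst sz]].
have [c1|c2] := leqP (c u) 1.
  case: p pth lst sz => [|x [|y p]] /=.
  - by move=> _ uv; rewrite uv eqxx in neq.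
  - rewrite andbT => exu xv _; subst x.
    by move: (He _ _ exu); rewrite ceq eqxx.
  - move=> _ _; lia.
have := @walk_bound _ _ P HP _ _ pth; rewrite lst.
have := Hd _ _ neq ceq c2; lia.
Qed.

Lemma adj_neq (T : finType) (e : rel T) k c u v :
  packing_coloring e k c -> u != v -> e u v -> c u != c v.
Proof.
move=> [Hr Hc] neq euv; apply/eqP => ceq; apply: (Hc _ _ neq ceq).
exists [:: v]; split => //=; first by rewrite euv.
by have := Hr u; lia.
Qed.

Lemma d2_eq (T : finType) (e : rel T) k c u w v :
  packing_coloring e k c -> u != v -> e u w -> e w v -> c u = c v -> c u = 1.
Proof.
move=> [Hr Hc] neq euw ewv ceq.
have [h|h] := leqP (c u) 1; first by have := Hr u; lia.
exfalso; apply: (Hc _ _ neq ceq).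
by exists [:: w; v]; split => //=; rewrite euw ewv.
Qed.

Theorem mainTheorem5 (n : nat) (hn : 1 <= n) :
  packing_chromatic_number_is (@X_graph n) 3 /\
  packing_chromatic_number_is (@Y_graph n) 3.
Proof.
split; split.
- exists (fun v : 'I_(n + 3) => cX v).
  apply: (@coloring_ok _ _ _ (fun v : 'I_(n + 3) => PX v)).
  + by move=> v; apply: X4.
  + by move=> x y; apply: X2.
  + by move=> x y; apply: X1.
  + by move=> x y neq; apply: X3.
- move=> k [c Hc].
  have h0 : 0 < n + 3 by rewrite addn3.
  have h1 : 1 < n + 3 by rewrite addn3.
  have h2 : 2 < n + 3 by rewrite addn3.
  pose v0 := Ordinal h0; pose v1 := Ordinal h1; pose v2 := Ordinal h2.
  have a01 := @adj_neq _ _ _ _ v0 v1 Hc erefl erefl.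
  have a02 := @adj_neq _ _ _ _ v0 v2 Hc erefl erefl.
  have a12 := @adj_neq _ _ _ _ v1 v2 Hc erefl erefl.
  have := (Hc.1 v0); have := (Hc.1 v1); have := (Hc.1 v2); lia.
- exists (fun v : 'I_(n + 4) => cY v).
  apply: (@coloring_ok _ _ _ (fun v : 'I_(n + 4) => PY v)).
  + by move=> v; apply: Y4.
  + by move=> x y; apply: Y2.
  + by move=> x y; apply: Y1.
  + by move=> x y neq; apply: Y3.
- move=> k [c Hc].
  have h0 : 0 < n + 4 by rewrite addn4.
  have h1 : 1 < n + 4 by rewrite addn4.
  have h2 : 2 < n + 4 by rewrite addn4.
  have h3 : 3 < n + 4 by rewrite addn4.
  pose v0 := Ordinal h0; pose v1 := Ordinal h1; pose v2 := Ordinal h2; pose v3 := Ordinal h3.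
  have a01 := @adj_neq _ _ _ _ v0 v1 Hc erefl erefl.
  have a12 := @adj_neq _ _ _ _ v1 v2 Hc erefl erefl.
  have a23 := @adj_neq _ _ _ _ v2 v3 Hc erefl erefl.
  have a30 := @adj_neq _ _ _ _ v3 v0 Hc erefl erefl.
  have d02 := @d2_eq _ _ _ _ v0 v1 v2 Hc erefl erefl erefl.
  have d13 := @d2_eq _ _ _ _ v1 v2 v3 Hc erefl erefl erefl.
  have := (Hc.1 v0); have := (Hc.1 v1); have := (Hc.1 v2); have := (Hc.1 v3); lia.
Qed.
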